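(* Let $X$ be a Banach space and $\bar x\in X$. Suppose $F:X\rightrightarrows Y$ is upper $K$-convex and that $F(x)$ is $K$-sequentially compact for all $x$ in a neighborhood of $\bar x$, and that $D_Y$ is $K$-closed. Then $$\partial F(\bar x)=\{T\in B(X,Y)\mid F(x)\subset F(\bar x)+T(x-\bar x)+K\ \text{ for all }x\in X\}.$$
   Context: $Y$ is a real normed space; $B(X,Y)$ is the space of bounded linear operators $X\to Y$; $B(x,\delta)$ is the open ball and $D_Y$ the closed unit ball. $K\subset Y$ is a pointed closed convex cone. Set-valued maps have nonempty values; $\operatorname{Epi}F(x)=F(x)+K$; $e(A,B)=\sup_{a\in A}\inf_{b\in B}\|a-b\|$. The Fréchet subdifferential $\widehat\partial F(\bar x)$ is the set of all $T\in B(X,Y)$ such that for every $\varepsilon>0$ there is $\delta>0$ with $F(x)+K\subset F(\bar x)+K+T(x-\bar x)+\varepsilon\|x-\bar x\|D_Y$ for all $x\in B(\bar x,\delta)$. The limiting subdifferential $\partial F(\bar x)$ is the set of all $T\in B(X,Y)$ for which there exist $x_n\to\bar x$ with $e(\operatorname{Epi}F(x_n),\operatorname{Epi}F(\bar x))\to0$ and $T_n\in\widehat\partial F(x_n)$ with $T_n(x)\to T(x)$ for every $x\in X$. $F$ is upper $K$-convex if $\lambda F(x)+(1-\lambda)F(y)\subset F(\lambda x+(1-\lambda)y)+K$ for all $x,y\in X$, $\lambda\in(0,1)$. A nonempty $A\subset Y$ is $K$-sequentially compact if for every $(a_n)\subset A$ there is $(c_n)\subset K$ such that $(a_n-c_n)$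 has a subsequence converging to an element of $A$. $D_Y$ is $K$-closed means $D_Y+K$ is closed. *)

(* Defs.v *)
From HB Require Import structures.
From mathcomp Require Import all_boot all_order all_algebra.
From mathcomp Require Import all_classical all_reals all_analysis.
Set Implicit Arguments. Unset Strict Implicit. Unset Printing Implicit Defensive.
Import Order.TTheory GRing.Theory Num.Theory.
Import numFieldNormedType.Exports.
Local Open Scope classical_set_scope.
Local Open Scope ring_scope.

Section Defs.
Variable R : realType.

Definition mink_sum (Y : normedModType R) (A B : set Y) : set Y :=
  [set a + b | a in A & b in B].

Definition pointed_closed_convex_cone (Y : normedModType R) (K : set Y) : Prop :=
  [/\ K 0,
      (forall (t : R) (k : Y), 0 <= t -> K k -> K (t *: k)),
      (forall (l : R) (a b : Y), 0 <= l <= 1 -> K a -> K b -> K (l *: a + (1 - l) *: b)),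
      closed K &
      (forall k : Y, K k -> K (- k) -> k = 0)].

Definition is_blin (X Y : normedModType R) (T : X -> Y) : Prop :=
  linear T /\ continuous T.

Definition Epi (X Y : normedModType R) (K : set Y) (F : X -> set Y) (x : X) : set Y :=
  mink_sum (F x) K.

Definition excess (Y : normedModType R) (A B : set Y) : \bar R :=
  ereal_sup [set ereal_inf [set (`|a - b|)%:E | b in B] | a in A].

Definition frechet_subdiff (X Y : normedModType R) (K : set Y) (F : X -> set Y) (xb : X)
  : set (X -> Y) :=
  [set T | is_blin T /\
     forall eps : R, 0 < eps -> exists2 delta : R, 0 < delta &
       forall x : X, `|x - xb| < delta ->
         Epi K F x `<=`
         mink_sum (mink_sum (Epi K F xb) [set T (x - xb)])
              [set y : Y | `|y| <= eps * `|x - xb|]].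

Definition limiting_subdiff (X Y : normedModType R) (K : set Y) (F : X -> set Y) (xb : X)
  : set (X -> Y) :=
  [set T | is_blin T /\
     exists xs : nat -> X, exists Ts : nat -> (X -> Y),
       [/\ xs @ \oo --> xb,
           (fun n => excess (Epi K F (xs n)) (Epi K F xb)) @ \oo --> 0%E,
           (forall n, frechet_subdiff K F (xs n) (Ts n)) &
           (forall x : X, (fun n => Ts n x) @ \oo --> T x)]].

Definition upper_K_convex (X Y : normedModType R) (K : set Y) (F : X -> set Y) : Prop :=
  forall (x y : X) (l : R), 0 < l < 1 ->
    [set l *: a + (1 - l) *: b | a in F x & b in F y]
      `<=` mink_sum (F (l *: x + (1 - l) *: y)) K.

Definition K_seq_compact (Y : normedModType R) (K : set Y) (A : set Y) : Prop :=
  A !=set0 /\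
  forall a : nat -> Y, (forall n, A (a n)) ->
    exists c : nat -> Y, (forall n, K (c n)) /\
      exists phi : nat -> nat, {homo phi : m n / (m < n)%N >-> (m < n)%N} /\
        exists2 l : Y, A l & (fun n => a (phi n) - c (phi n)) @ \oo --> l.

Definition unit_ball_K_closed (Y : normedModType R) (K : set Y) : Prop :=
  closed (mink_sum [set y : Y | `|y| <= 1] K).

End Defs.

(* Main.v *)
Require Import Defs.
From HB Require Import structures.
From mathcomp Require Import all_boot all_order all_algebra.
From mathcomp Require Import all_classical all_reals all_analysis.
From mathcomp Require Import ring lra.
Import Order.TTheory GRing.Theory Num.Theory.
Import numFieldNormedType.Exports.
Local Open Scope classical_set_scope.
Local Open Scope ring_scope.
Set Implicit Arguments. Unset Strict Implicit.

Section Aux.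
Variable R : realType.

Definition pack_lin (X Y : normedModType R) (f : X -> Y) (lf : linear f) : {linear X -> Y} :=
  HB.pack f (GRing.isLinear.Build _ _ _ _ _ lf).

Arguments pack_lin {X Y} f lf.
Lemma linZ (X Y : normedModType R) (f : X -> Y) : linear f -> forall (a : R) v, f (a *: v) = a *: f v.
Proof. move=> lf a v; exact: (linearZ_LR (pack_lin f lf) a v). Qed.
Lemma linB (X Y : normedModType R) (f : X -> Y) : linear f -> forall u v, f (u - v) = f u - f v.
Proof. by move=> lf u v; exact: (linearB (pack_lin f lf)). Qed.
Lemma linD (X Y : normedModType R) (f : X -> Y) : linear f -> forall u v, f (u + v) = f u + f v.
Proof. by move=> lf u v; exact: (linearD (pack_lin f lf)). Qed.
Lemma lin0 (X Y : normedModType R) (f : X -> Y) : linear f -> f 0 = 0.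
Proof. by move=> lf; exact: (linear0 (pack_lin f lf)). Qed.

Arguments linZ {X Y f}.
Arguments linB {X Y f}.
Arguments linD {X Y f}.
Arguments lin0 {X Y f}.
Variable Y : normedModType R.

Lemma ms_inv (A B : set Y) z : mink_sum A B z -> exists a b, A a /\ B b /\ z = a + b.
Proof. by case=> a Aa [b Bb <-]; exists a, b. Qed.
Lemma ms_in (A B : set Y) a b : A a -> B b -> mink_sum A B (a + b).
Proof. by move=> Aa Bb; exists a => //; exists b. Qed.

Lemma cone_add (K : set Y) : pointed_closed_convex_cone K ->
  forall a b, K a -> K b -> K (a + b).
Proof.
case=> K0 Ks Kc Kcl Kp a b Ka Kb.
have h : K (2^-1 *: a + (1 - 2^-1) *: b).
  by apply: Kc => //; apply/andP; split; lra.
have := Ks 2 _ (ler0n _ 2) h.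
have -> : (1 - 2^-1 : R) = 2^-1 by lra.
by rewrite scalerDr !scalerA mulfV ?pnatr_eq0 // !scale1r.
Qed.

Lemma approx_iter (E : set Y) (w e0 : Y) (lam c : R) :
  0 < lam < 1 -> 0 <= c -> E e0 ->
  (forall e, E e -> exists e', E e' /\ `|e' - (lam *: w + (1-lam) *: e)| <= lam * c) ->
  forall m : nat, exists e, E e /\ `|e - w| <= (1-lam)^+m * `|e0 - w| + c.
Proof.
move=> /andP[l0 l1] c0 Ee0 step; elim=> [|m [e [Ee He]]].
  by exists e0; split => //; rewrite expr0 mul1r lerDl.
have [e' [Ee' He']] := step e Ee.
exists e'; split => //.
have -> : e' - w = (e' - (lam *: w + (1 - lam) *: e)) + (1 - lam) *: (e - w).
  rewrite scalerBr !scalerBl !scale1r.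
  set a := lam *: w; set b := lam *: e.
  rewrite opprD addrA.
  by rewrite [e' + (- a - _)]addrA subrK opprB addrA subrK.
rewrite (le_trans (ler_normD _ _)) // normrZ ger0_norm; last by rewrite subr_ge0 ltW.
have h2 : (1 - lam) * `|e - w| <= (1 - lam) * ((1 - lam) ^+ m * `|e0 - w| + c).
  by rewrite ler_wpM2l // subr_ge0 ltW.
apply: (le_trans (lerD He' h2)); rewrite exprS.
by rewrite le_eqVlt; apply/orP; left; apply/eqP; ring.
Qed.

Lemma frechet_global (X : normedModType R) (K : set Y) (F : X -> set Y) (u : X) (S : X -> Y) :
  pointed_closed_convex_cone K -> F u !=set0 -> upper_K_convex K F ->
  frechet_subdiff K F u S ->
  forall x y, F x y -> forall eps : R, 0 < eps ->
  exists2 e, Epi K F u e & `|y - S (x - u) - e| <= eps.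
Proof.
move=> Kc [f0 Ff0] Fconv [[Sl _] Fr] x y Fxy eps eps0.
have Kc' := Kc; case: Kc' => K0 Ks Kcv Kcl Kp.
set h := x - u; set r := `|h|; set w := y - S h.
have r0 : 0 <= r by apply: normr_ge0.
pose ep' := eps / (2 * (r + 1)).
have ep'0 : 0 < ep' by rewrite divr_gt0 // mulr_gt0 // ltr_wpDl.
have [delta d0 Hd] := Fr ep' ep'0.
pose lam := delta / (2 * (delta + r)).
have dr0 : 0 < 2 * (delta + r) by rewrite mulr_gt0 // ltr_wpDr.
have lam0 : 0 < lam by rewrite divr_gt0.
have lam1 : lam < 1 by rewrite ltr_pdivrMr // mul1r; lra.
have lamr : lam * r < delta.
  rewrite /lam mulrAC ltr_pdivrMr //; nra.
have step : forall e, Epi K F u e -> exists e', Epi K F u e' /\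
    `|e' - (lam *: w + (1-lam) *: e)| <= lam * (ep' * r).
  move=> e /ms_inv[f [k [Fuf [Kk ->]]]].
  pose z := lam *: x + (1 - lam) *: u.
  have zu : z - u = lam *: h.
    by rewrite /z /h scalerBr scalerBl scale1r addrA addrAC addrK.
  have : mink_sum (F z) K (lam *: y + (1 - lam) *: f).
    by apply: Fconv; [apply/andP; split | exists y => //; exists f].
  move=> /ms_inv[g [k1 [Fzg [Kk1 Eg]]]].
  have Ez : Epi K F z (lam *: y + (1 - lam) *: (f + k)).
    rewrite scalerDr addrA Eg -addrA; apply: ms_in => //.
    apply: (@cone_add K Kc) => //; apply: Ks => //; rewrite subr_ge0 ltW //.
  have nzu : `|z - u| < delta by rewrite zu normrZ gtr0_norm.
  have /ms_inv[q [d [/ms_inv[e' [s [Ee' [Hs Eqq]]]] [dle Eq]]]] := Hd z nzu _ Ez.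
  exists e'; split => //.
  have -> : e' - (lam *: w + (1 - lam) *: (f + k)) = - d.
    have E1 : lam *: w + (1 - lam) *: (f + k) = e' + d.
      have Hs' : s = S (z - u) := Hs.
      rewrite /w scalerBr -(linZ Sl) -zu -Hs' addrAC Eq Eqq.
      by rewrite addrAC addrK.
    by rewrite E1 opprD addrA subrr add0r.
  rewrite normrN (le_trans dle) // zu normrZ gtr0_norm //.
  by rewrite mulrCA.
have [m Hm] : exists m : nat, (1 - lam) ^+ m * `|f0 + 0 - w| < eps / 2.
  have q1 : `|1 - lam| < 1 by rewrite ger0_norm; lra.
  have : (fun n => (1 - lam) ^+ n * `|f0 + 0 - w|) @ \oo --> 0 * `|f0 + 0 - w|.
    exact: (cvgM (cvg_expr q1) (cvg_cst _)).
  rewrite mul0r => /cvgr_dist_lt /(_ (eps / 2)) [] ; first lra.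
  move=> N _ HN; exists N; have := HN N (leqnn N).
  by rewrite sub0r normrN => /(le_lt_trans (ler_norm _)).
have [e [Ee He]] := @approx_iter (Epi K F u) w (f0 + 0) lam (ep' * r) (ltac:(by apply/andP)) (ltac:(by rewrite mulr_ge0 // ltW))
   (ltac:(by apply: ms_in)) step m.
exists e => //.
rewrite -normrN opprB (le_trans He) //.
have : ep' * r <= eps / 2.
  rewrite /ep' mulrAC ler_pdivrMr; last by rewrite mulr_gt0 // ltr_wpDl.
  have -> : eps / 2 * (2 * (r + 1)) = eps * (r + 1) by field.
  nra.
move=> H; lra.
Qed.

Lemma strict_ge (phi : nat -> nat) : {homo phi : m n / (m < n)%N >-> (m < n)%N} ->
  forall n, (n <= phi n)%N.
Proof.
move=> Hphi; elim=> [//|n IH].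
by apply: (leq_ltn_trans IH); apply: Hphi.
Qed.

Lemma epi_closed (K : set Y) (A : set Y) : pointed_closed_convex_cone K ->
  K_seq_compact K A -> forall w,
  (forall n : nat, exists2 e, mink_sum A K e & `|w - e| <= harmonic n) ->
  mink_sum A K w.
Proof.
move=> Kc [_ Acomp] w Hw.
have Kc' := Kc; case: Kc' => K0 Ks Kcv Kcl Kp.
have /choice[e He] : forall n : nat, exists e, mink_sum A K e /\ `|w - e| <= harmonic n.
  by move=> n; have [e ? ?] := Hw n; exists e.
have /choice[a Ha] : forall n, exists a, A a /\ K (e n - a).
  move=> n; have [/ms_inv[a [k [Aa [Kk ->]]]] _] := He n.
  by exists a; split => //; rewrite addrAC subrr add0r.
have [c [Kc0 [phi [phim [l Al Hl]]]]] := Acomp a (fun n => (Ha n).1).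
have ecv : (fun n => e (phi n)) @ \oo --> w.
  apply/cvgrPdist_le => eps eps0.
  have := @cvg_harmonic R; move=> /cvgr_dist_lt /(_ eps eps0) [N _ HN].
  exists N => // n /= Nn.
  apply: (le_trans (He (phi n)).2); apply: ltW.
  have := HN n Nn; rewrite sub0r normrN ger0_norm ?harmonic_ge0 //.
  apply: le_lt_trans; rewrite /= lef_pV2 ?qualifE //. rewrite (ler_nat R) ltnS; exact: strict_ge. exact: (ltr0Sn R). exact: (ltr0Sn R).
have ucv : (fun n => e (phi n) - (a (phi n) - c (phi n))) @ \oo --> w - l.
  exact: cvgB.
have Kwl : K (w - l).
  move: ucv; apply: closed_cvg => //; apply: nearW => n.
  rewrite opprB addrCA addrC; apply: (@cone_add K Kc); last exact: Kc0.
  exact: (Ha (phi n)).2.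
by rewrite -(subrK l w) addrC; apply: ms_in.
Qed.

Lemma tele3 (y t s e1 b : Y) : y - t - b = (y - s - e1) + (s - t) + (e1 - b).
Proof.
by rewrite [X in X + (e1 - b)]addrAC [y - s + _]addrA subrK addrA subrK.
Qed.

Lemma excess_lt (A B : set Y) (eps : R) a : (excess A B < eps%:E)%E -> A a ->
  exists2 b, B b & `|a - b| < eps.
Proof.
move=> Hex Aa.
have : (ereal_inf [set (`|a - b|)%:E | b in B] < eps%:E)%E.
  apply: le_lt_trans Hex; apply: ereal_sup_ubound; by exists a.
case/ereal_inf_lt => _ [b Bb <-]; rewrite lte_fin => Hb.
by exists b.
Qed.

Lemma excess_self (A : set Y) : A !=set0 -> excess A A = 0%E.
Proof.
move=> [a0 Aa0].
rewrite /excess.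
have -> : [set ereal_inf [set (`|a - b|)%:E | b in A] | a in A] = [set 0%E].
  apply/seteqP; split => z.
    case=> a Aa <-; apply/eqP; rewrite eq_le; apply/andP; split.
      by apply: ereal_inf_lbound; exists a => //; rewrite subrr normr0.
    by apply: le_ereal_inf_tmp => _ [b _ <-]; rewrite lee_fin.
  move=> ->; exists a0 => //; apply/eqP; rewrite eq_le; apply/andP; split.
    by apply: ereal_inf_lbound; exists a0 => //; rewrite subrr normr0.
  by apply: le_ereal_inf_tmp => _ [b _ <-]; rewrite lee_fin.
exact: ereal_sup1.
Qed.

Lemma BS_bound (X : completeNormedModType R) (Ts : nat -> X -> Y) (T : X -> Y) :
  (forall n, is_blin (Ts n)) -> (forall x, (fun n => Ts n x) @ \oo --> T x) ->
  exists2 M, 0 < M & forall n v, `|Ts n v| <= M * `|v|.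
Proof.
move=> Tb Tcv.
have UB : uniform_bounded (range Ts).
  apply: Banach_Steinhauss.
    move=> f [n _ <-]; have [Ln Cn] := Tb n; split => //.
    apply/(bounded_funP (pack_lin (Ts n) Ln)).
    by apply/(linear_bounded_continuous (pack_lin (Ts n) Ln)).
  move=> x.
  have := cvg_seq_bounded (cvgP _ (Tcv x)).
  move=> [M [_ HM]]; exists (M + 1) => f [n _ <-].
  by apply: (HM (M + 1)) => //; rewrite ltrDl.
have [M HM] := UB 1.
exists (`|M| + 1); first by rewrite ltr_wpDl.
move=> n v; have [Ln _] := Tb n.
have [->|v0] := eqVneq v 0.
  by rewrite (lin0 Ln) !normr0 mulr0.
have nv0 : 0 < `|v| by rewrite normr_gt0.
have H1 : `|Ts n (`|v|^-1 *: v)| <= M.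
  apply: (HM (Ts n)); first by exists n.
  by rewrite normrZ ger0_norm ?invr_ge0 // mulVf // gt_eqF.
move: H1; rewrite (linZ Ln) normrZ ger0_norm ?invr_ge0 //.
rewrite ler_pdivrMl // => H1.
apply: (le_trans H1); rewrite [X in _ <= X]mulrC ler_wpM2l //.
by rewrite (le_trans (ler_norm M)) // lerDl.
Qed.
End Aux.

Theorem mainTheorem9 (R : realType) (X : completeNormedModType R)
  (Y : normedModType R) (K : set Y) (F : X -> set Y) (xb : X) :
  pointed_closed_convex_cone K ->
  (forall x : X, F x !=set0) ->
  upper_K_convex K F ->
  (\forall x \near xb, K_seq_compact K (F x)) ->
  unit_ball_K_closed K ->
  limiting_subdiff K F xb =
  [set T : X -> Y | is_blin T /\
     forall x : X, F x `<=` mink_sum (mink_sum (F xb) [set T (x - xb)]) K].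
Proof.
move=> Kc Fne Fconv Fnear _.
have Fxb : K_seq_compact K (F xb) := nbhs_singleton Fnear.
have Kc' := Kc; case: Kc' => K0 Ks Kcv Kcl Kp.
apply/seteqP; split => T.
- case=> Tb [xs [Ts [xcv excv Tsd Tcv]]]; split => // x y Fxy.
  have Tl := Tb.1.
  set w := y - T (x - xb).
  suff : Epi K F xb w.
    case/ms_inv => a [k [Fa [Kk Ew]]].
    have -> : y = (a + T (x - xb)) + k.
      by rewrite addrAC -Ew /w subrK.
    by apply: ms_in => //; apply: ms_in.
  apply: (epi_closed Kc Fxb) => n.
  set eps := harmonic n.
  have eps0 : 0 < eps := harmonic_gt0 n.
  have [M M0 HM] := BS_bound (fun n => (Tsd n).1) Tcv.
  have cva : (fun m => Ts m (x - xs m)) @ \oo --> T (x - xb).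
    have -> : (fun m => Ts m (x - xs m)) = (fun m => Ts m (x - xb) + Ts m (xb - xs m)).
      apply/funext => m; rewrite -(linD (Tsd m).1.1); congr (Ts m _).
      by rewrite addrA subrK.
    rewrite -[T (x - xb)]addr0; apply: cvgD; first exact: Tcv.
    apply/cvgrPdist_lt => e e0.
    have := xcv; move=> /cvgr_dist_lt /(_ (e / M)) [] ; first by rewrite divr_gt0.
    move=> N _ HN; exists N => // m /= Nm.
    rewrite sub0r normrN (le_lt_trans (HM m _)) //.
    by rewrite mulrC -ltr_pdivlMr //; exact: HN.
  have e30 : 0 < eps / 3 by rewrite divr_gt0.
  have := cva; move=> /cvgr_dist_lt /(_ _ e30) [N1 _ H1].
  have [N2 _ H2] : \forall m \near \oo,
      (excess (Epi K F (xs m)) (Epi K F xb) < (eps / 3)%:E)%E.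
    apply: (excv (fun z => (z < (eps / 3)%:E)%E)); apply: open_ereal_lt'; by rewrite lte_fin.
  pose m := maxn N1 N2.
  have Hdist := H1 m (leq_maxl _ _).
  have Hex := H2 m (leq_maxr _ _).
  have [e1 Ee1 He1] := frechet_global Kc (Fne (xs m)) Fconv (Tsd m) Fxy e30.
  have [b Eb Hb] := excess_lt Hex Ee1.
  exists b => //.
  rewrite /w (tele3 _ _ (Ts m (x - xs m)) e1).
  apply: (le_trans (ler_normD _ _)); apply: (le_trans (lerD (ler_normD _ _) (lexx _))).
  rewrite distrC in Hdist.
  lra.
- case=> Tb HT; split => //.
  exists (fun _ => xb), (fun _ => T); split.
  + exact: cvg_cst.
  + rewrite excess_self; first exact: cvg_cst.
    by have [f Ff] := Fne xb; exists (f + 0); apply: ms_in.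
  + move=> n; split => // eps eps0; exists 1 => // x _ e.
    case/ms_inv => f [k [Ff [Kk ->]]].
    have /ms_inv[q [k' [/ms_inv[a [t [Fa [Ht Eq]]]] [Kk' Ef]]]] := HT x f Ff.
    have Ht' : t = T (x - xb) := Ht.
    rewrite Ef Eq Ht'.
    have -> : a + T (x - xb) + k' + k = ((a + (k' + k)) + T (x - xb)) + 0.
      by rewrite addr0 -addrA addrAC.
    apply: ms_in; last by rewrite /= normr0 mulr_ge0 // ltW.
    apply: ms_in; last by [].
    by apply: ms_in => //; exact: cone_add.
  + move=> v; exact: cvg_cst.
Qed.
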